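(* For every $k\ge1$ for which $\beta_0,\dots,\beta_k$ are defined, the subgroup $\Gamma_k=\langle\beta_0,\beta_1,\dots,\beta_k\rangle$ of $\mathbb{Q}$ equals $\frac{1}{Q_k}\mathbb{Z}$.
   Context: Setting: $k$ (the field) is algebraically closed of characteristic $0$; $\nu^*$ is a $k$-valuation of a function field $K^*$ of transcendence degree $2$ whose value group is a subgroup of $\mathbb{Q}$ and whose residue field is $k$; $S$ is an algebraic two-dimensional regular local ring with quotient field $K^*$ dominated by $V^*$, with regular parameters $(x,y)$, and $\nu^*(x)=1$. Jumping polynomials: $T_0=x$, $T_1=y$, $q_0=\infty$, $p_1,q_1$ coprime positive integers with $\nu^*(y)=p_1/q_1$; for $i\ge1$, $n_{i,j}$ ($0\le j<i$) are nonnegative integers with $n_{i,j}<q_j$ and $q_i\nu^*(T_i)=\sum_{j<i}n_{i,j}\nu^*(T_j)$, $\lambda_i\in k$ is the residue of $T_i^{q_i}/\prod_{j<i}T_j^{n_{i,j}}$, $T_{i+1}=T_i^{q_i}-\lambda_i\prod_{j<i}T_j^{n_{i,j}}$, and $p_{i+1},q_{i+1}$ are coprime positive integers with $\nu^*(T_{i+1})=q_i\nu^*(T_i)+\frac{1}{q_1\cdots q_i}\frac{p_{i+1}}{q_{i+1}}$. Put $\beta_i=\nu^*(T_i)$, $Q_i=q_1\cdots q_i$. *)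

(* Defs.v *)
From HB Require Import structures.
From mathcomp Require Import all_boot all_order all_algebra.
Set Implicit Arguments. Unset Strict Implicit. Unset Printing Implicit Defensive.
Import Order.TTheory GRing.Theory Num.Theory.
Local Open Scope ring_scope.

Definition Qprod (q : nat -> nat) (k : nat) : nat := (\prod_(1 <= i < k.+1) q i)%N.

Definition rat_valuation (K : fieldType) (nu : K -> rat) : Prop :=
  (forall a b : K, a != 0 -> b != 0 -> nu (a * b) = nu a + nu b) /\
  (forall a b : K, a != 0 -> b != 0 -> a + b != 0 ->
      Num.min (nu a) (nu b) <= nu (a + b)).

(* The jumping polynomials T_0, ..., T_N (all nonzero, so beta_0..beta_N are
   defined), with the data p_i, q_i (i >= 1), n_{i,j}, lambda_i as in the paper.
   q 0 is unused (q_0 = infinity). *)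
Definition jumping_data (K : fieldType) (nu : K -> rat) (x y : K)
    (T : nat -> K) (lam : nat -> K) (p q : nat -> nat) (n : nat -> nat -> nat)
    (N : nat) : Prop :=
  [/\ [/\ T 0%N = x, T 1%N = y & nu x = 1],
      [/\ (0 < p 1%N)%N, (0 < q 1%N)%N, coprime (p 1%N) (q 1%N)
        & nu y = (p 1%N)%:R / (q 1%N)%:R],
      (forall i, (i <= N)%N -> T i != 0) &
      (forall i, (1 <= i < N)%N ->
        [/\ (forall j, (1 <= j < i)%N -> (n i j < q j)%N),
            (q i)%:R * nu (T i) = \sum_(j < i) (n i j)%:R * nu (T j),
            [/\ lam i != 0, nu (lam i) = 0 &
            T i.+1 = T i ^+ q i - lam i * \prod_(j < i) T j ^+ n i j],
            [/\ (0 < p i.+1)%N, (0 < q i.+1)%N & coprime (p i.+1) (q i.+1)] &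
            nu (T i.+1) = (q i)%:R * nu (T i)
                          + (Qprod q i)%:R^-1 * ((p i.+1)%:R / (q i.+1)%:R)])].

(* Main.v *)
Require Import Defs.
From HB Require Import structures.
From mathcomp Require Import all_boot all_order all_algebra.
From mathcomp Require Import ring.
Import Order.TTheory GRing.Theory Num.Theory.
Local Open Scope ring_scope.

Section Aux.
Variable b : nat -> rat.

Definition G (k : nat) (r : rat) :=
  exists c : nat -> int, r = \sum_(i < k.+1) (c i)%:~R * b i.

Lemma G_add k r s : G k r -> G k s -> G k (r + s).
Proof.
move=> [c ->] [d ->]; exists (fun i => c i + d i).
rewrite -big_split /=; apply: eq_bigr => i _; by rewrite intrD mulrDl.
Qed.

Lemma G_zmul k z r : G k r -> G k (z%:~R * r).
Proof.
move=> [c ->]; exists (fun i => z * c i).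
rewrite mulr_sumr; apply: eq_bigr => i _; by rewrite intrM mulrA.
Qed.

Lemma G_beta k i : (i <= k)%N -> G k (b i).
Proof.
move=> Hi; exists (fun j => ((j == i) : nat)%:Z).
have Hi' : (i < k.+1)%N by [].
rewrite (bigD1 (Ordinal Hi')) //= eqxx mul1r big1 ?addr0 // => j.
rewrite -val_eqE /= => /negbTE ->; by rewrite mul0r.
Qed.

Lemma bezout_nat (a c : nat) : coprime a c ->
  exists u v : int, u * a%:Z + v * c%:Z = 1.
Proof.
move=> /eqP Hc; case: (Bezoutz a%:Z c%:Z) => u [v E]; exists u, v.
by rewrite E /gcdz /= Hc.
Qed.

Lemma H_sum k (Q : nat) (c : nat -> int) :
  (forall i, (i <= k)%N -> exists z : int, b i = z%:~R / Q%:R) ->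
  exists z : int, \sum_(i < k.+1) (c i)%:~R * b i = z%:~R / Q%:R.
Proof.
move=> H.
apply: (big_ind (fun r => exists z : int, r = z%:~R / Q%:R)).
- by exists 0; rewrite mul0r.
- move=> r s [z1 ->] [z2 ->]; exists (z1 + z2); by rewrite intrD mulrDl.
- move=> i _; have [z ->] := H i (ltn_ord i).
  exists (c i * z); by rewrite intrM mulrA.
Qed.
End Aux.

Theorem corollary5p4 (K : fieldType) (nu : K -> rat) (x y : K) (T lam : nat -> K)
    (p q : nat -> nat) (n : nat -> nat -> nat) (N : nat) :
  rat_valuation nu ->
  jumping_data nu x y T lam p q n N ->
  forall k : nat, (1 <= k <= N)%N ->
  forall r : rat,
    (exists c : 'I_k.+1 -> int, r = \sum_(i < k.+1) (c i)%:~R * nu (T i)) <->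
    (exists z : int, r = z%:~R / (Qprod q k)%:R).
Proof.
move=> _ [[T0 T1 nux] [p1 q1 cop1 nuy] _ Hstep].
set b := fun i => nu (T i).
have main : forall k, (1 <= k <= N)%N ->
  [/\ (0 < Qprod q k)%N,
      (forall i, (i <= k)%N -> exists z : int, b i = z%:~R / (Qprod q k)%:R)
    & G b k (Qprod q k)%:R^-1].
  elim=> [//|k IH] /andP [_ HkN].
  have QS : Qprod q k.+1 = (Qprod q k * q k.+1)%N.
    rewrite /Qprod big_nat_recr //=.
  case: (posnP k) => [-> | kpos].
    have Q1 : Qprod q 1 = q 1%N by rewrite /Qprod big_nat1.
    have q1ne : (q 1%N)%:R != 0 :> rat by rewrite pnatr_eq0 -lt0n.
    rewrite Q1; split => //.
    + case=> [|[|//]] _.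
      * exists (q 1%N)%:Z; rewrite /b T0 nux pmulrn divff //.
      * exists (p 1%N)%:Z; rewrite /b T1 nuy !pmulrn //.
    + have [u [v E]] := bezout_nat _ _ cop1.
      have -> : (q 1%N)%:R^-1 = u%:~R * b 1%N + v%:~R * b 0%N :> rat.
        rewrite /b T0 T1 nux nuy.
        have := congr1 (fun z : int => z%:~R : rat) E.
        rewrite intrD !intrM /= -!pmulrn => E'.
        apply: (mulfI q1ne); rewrite mulrV ?unitfE //; apply: (etrans (esym E')); field; done.
      apply: G_add; apply: G_zmul; apply: G_beta => //.
  have [Qpos Hb Hinv] := IH (introT andP (conj kpos (ltnW HkN))).
  have [_ Hq Hlam [pk qk copk] Hnu] := Hstep k (introT andP (conj kpos HkN)).
  have Qne : (Qprod q k)%:R != 0 :> rat by rewrite pnatr_eq0 -lt0n.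
  have qne : (q k.+1)%:R != 0 :> rat by rewrite pnatr_eq0 -lt0n.
  have [zk Ezk] := Hb k (leqnn k).
  split.
  - by rewrite QS muln_gt0 Qpos qk.
  - move=> i; rewrite leq_eqVlt => /orP [/eqP -> | Hi].
    + exists ((q k)%:Z * zk * (q k.+1)%:Z + (p k.+1)%:Z).
      rewrite /b Hnu -/(b k) Ezk QS natrM intrD !intrM -!pmulrn.
      field; rewrite Qne qne //.
    + have [z Ez] := Hb i Hi; exists (z * q k.+1).
      rewrite Ez QS natrM intrM -!pmulrn; field; rewrite Qne qne //.
  - have [u [v E]] := bezout_nat _ _ copk.
    have Hp : G b k.+1 ((Qprod q k.+1)%:R^-1 * (p k.+1)%:R).
      have -> : (Qprod q k.+1)%:R^-1 * (p k.+1)%:R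
               = b k.+1 + (- (q k)%:Z)%:~R * b k.
        rewrite /b Hnu QS natrM rmorphN /= -pmulrn; field; rewrite Qne qne //.
      apply: G_add; first exact: G_beta.
      apply: G_zmul; apply: G_beta; exact: leqW.
    have Hi : G b k.+1 ((Qprod q k)%:R^-1).
      case: Hinv => c Ec; exists (fun i => if i == k.+1 then 0 else c i).
      rewrite big_ord_recr /= eqxx mul0r addr0 Ec.
      apply: eq_bigr => i _; by rewrite (ltn_eqF (ltn_ord i)).
    have -> : (Qprod q k.+1)%:R^-1 =
       u%:~R * ((Qprod q k.+1)%:R^-1 * (p k.+1)%:R)
       + v%:~R * (Qprod q k)%:R^-1 :> rat.
      have := congr1 (fun z : int => z%:~R : rat) E.
      rewrite intrD !intrM /= => E'.
      rewrite QS natrM.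
      rewrite -!pmulrn in E'.
      apply: (mulfI (mulf_neq0 Qne qne)).
      rewrite mulrV; last by rewrite unitfE mulf_neq0.
      apply: (etrans (esym E')); move: Qne qne.
      set A := (Qprod q k)%:R. set B := (q k.+1)%:R. set U := u%:~R. set V := v%:~R. set P := (p k.+1)%:R. move=> hA hB; clearbody A B U V P; field; rewrite hA hB //.
    apply: G_add; [apply: G_zmul; exact: Hp | apply: G_zmul; exact: Hi].
move=> k Hk r.
have [Qpos Hb Hinv] := main k Hk.
split.
- move=> [c ->].
  have [z Ez] := H_sum b k (Qprod q k) (fun i => if (i < k.+1)%N then c (inord i) else 0) Hb.
  exists z; rewrite -Ez; apply: eq_bigr => i _.
  by rewrite ltn_ord inord_val.
- move=> [z ->].
  have [c Ec] := G_zmul b k z _ Hinv.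
  exists (fun i => c i); by rewrite -Ec.
Qed.
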